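(* Let $y_0\in E$ and suppose: (A1) $\eta>0$ on $[y_0,\infty)$ and $\eta\in C^2([y_0,\infty))$; (A2) $b^2/\eta$, $\tilde a/\eta$ and $\eta'/\eta$ are bounded on $[y_0,\infty)$; (A3) $\Psi\eta(y)\to1$ as $y\to\infty$. Let $u$ be a solution of $$0=\tfrac12b^2u''+\tilde au'+\eta u-u^2-d\frac{(u')^2}{u}$$ on $[y_0,\infty)$ with $C_1\eta\le u\le C_2\eta$ there, for some constants $0<C_1<C_2$. Then $u(y)/\eta(y)\to1$ as $y\to\infty$.
   Context: $E=(E_-,\infty)$ with $E_-\in\{-\infty\}\cup\mathbb R$. $r,\lambda,\sigma,a,b,\rho,\delta:E\to\mathbb R$ are locally Lipschitz with $\sigma>0$, $b(y)\neq0$, $\rho(y)\in[-1,1]$; $R\in(0,\infty)\setminus\{1\}$. Define $\eta=\frac1R\big(\delta-(1-R)(r+\frac{\lambda^2}{2R})\big)$, $\tilde a=a+\frac{1-R}{R}\rho\lambda b$, $d=\frac12b^2((1-\rho^2)R+\rho^2+1)$, and for positive $g\in C^2$, $\Psi g=1+\frac{\frac12b^2g''+\tilde ag'}{g^2}-d\frac{(g')^2}{g^3}$. A solution on $[y_0,\infty)$ is a positive $C^2$ function satisfying the equation there. *)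

(* Defs.v *)
From Stdlib Require Import Reals.
From Coquelicot Require Import Coquelicot.
Open Scope R_scope.

(* The state space E = (Em, +oo), with Em in {-oo} U R (Em <> +oo). *)
Definition inE (Em : Rbar) (y : R) : Prop := Rbar_lt Em (Finite y).

Definition loc_lipschitz_on (Em : Rbar) (f : R -> R) : Prop :=
  forall y, inE Em y -> exists eps L, 0 < eps /\
    forall x z, inE Em x -> inE Em z -> Rabs (x - y) < eps -> Rabs (z - y) < eps ->
      Rabs (f x - f z) <= L * Rabs (x - z).

Definition is_deriv_from (y0 : R) (f f' : R -> R) : Prop :=
  forall y, y0 <= y ->
    filterlim (fun x => (f x - f y) / (x - y))
      (within (fun x => x <> y /\ y0 <= x) (locally y)) (locally (f' y)).

Definition cont_from (y0 : R) (f : R -> R) : Prop :=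
  forall y, y0 <= y ->
    filterlim f (within (fun x => y0 <= x) (locally y)) (locally (f y)).

Definition is_C2_from (y0 : R) (f f1 f2 : R -> R) : Prop :=
  is_deriv_from y0 f f1 /\ is_deriv_from y0 f1 f2 /\ cont_from y0 f2.

Definition bounded_from (y0 : R) (f : R -> R) : Prop :=
  exists M, forall y, y0 <= y -> Rabs (f y) <= M.

(* Model coefficients; Rr is the parameter R of the paper. *)
Definition eta (Rr : R) (r lam delta : R -> R) (y : R) : R :=
  / Rr * (delta y - (1 - Rr) * (r y + (lam y) ^ 2 / (2 * Rr))).

Definition atilde (Rr : R) (a rho lam b : R -> R) (y : R) : R :=
  a y + (1 - Rr) / Rr * rho y * lam y * b y.

Definition dcoef (Rr : R) (b rho : R -> R) (y : R) : R :=
  / 2 * (b y) ^ 2 * ((1 - (rho y) ^ 2) * Rr + (rho y) ^ 2 + 1).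

Definition Psi (b atl d : R -> R) (g g1 g2 : R -> R) (y : R) : R :=
  1 + (/ 2 * (b y) ^ 2 * g2 y + atl y * g1 y) / (g y) ^ 2
    - d y * (g1 y) ^ 2 / (g y) ^ 3.

Definition is_solution_from (y0 : R) (b atl et d : R -> R) (u u1 u2 : R -> R) : Prop :=
  is_C2_from y0 u u1 u2 /\ (forall y, y0 <= y -> 0 < u y) /\
  (forall y, y0 <= y ->
     0 = / 2 * (b y) ^ 2 * u2 y + atl y * u1 y + et y * u y - (u y) ^ 2
         - d y * (u1 y) ^ 2 / u y).

(* Main.v *)
Require Import Defs.
From Stdlib Require Import Reals Lra Classical.
From Coquelicot Require Import Coquelicot.
Open Scope R_scope.
Open Scope R_scope.

Lemma Rabs_le_between x y : Rabs x <= y -> - y <= x <= y.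
Proof. unfold Rabs; destruct Rcase_abs; lra. Qed.

Lemma cont_of_deriv f x l : derivable_pt_lim f x l ->
  forall eps, 0 < eps -> exists d, 0 < d /\ forall y, Rabs (y - x) < d -> Rabs (f y - f x) < eps.
Proof.
  intros H eps He.
  destruct (H 1 Rlt_0_1) as [del Hd].
  exists (Rmin del (eps / (Rabs l + 1))).
  assert (Hl : 0 < Rabs l + 1) by (pose proof (Rabs_pos l); lra).
  split. { apply Rmin_pos; [apply cond_pos | apply Rdiv_lt_0_compat; lra]. }
  intros y Hy.
  destruct (Req_dec y x) as [->|Hne]. { unfold Rminus; rewrite Rplus_opp_r, Rabs_R0; lra. }
  set (h := y - x).
  assert (Hh : h <> 0) by (unfold h; lra).
  assert (Hh1 : Rabs h < del) by (apply Rlt_le_trans with (1 := Hy); apply Rmin_l).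
  assert (Hh2 : Rabs h < eps / (Rabs l + 1)) by (apply Rlt_le_trans with (1 := Hy); apply Rmin_r).
  specialize (Hd h Hh Hh1).
  replace (x + h) with y in Hd by (unfold h; ring).
  set (q := (f y - f x) / h) in Hd.
  assert (Eq : f y - f x = q * h) by (unfold q; field; auto).
  rewrite Eq, Rabs_mult.
  assert (Hq : Rabs q <= Rabs l + 1).
  { replace q with ((q - l) + l) by ring.
    pose proof (Rabs_triang (q - l) l); lra. }
  assert (Hh3 : Rabs h * (Rabs l + 1) < eps).
  { apply (Rmult_lt_compat_r (Rabs l + 1)) in Hh2; [|lra].
    unfold Rdiv in Hh2. rewrite Rmult_assoc, Rinv_l in Hh2 by lra. lra. }
  pose proof (Rabs_pos h). pose proof (Rabs_pos q). nra.
Qed.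

Lemma mono g g1 p q : p <= q ->
  (forall x, p <= x <= q -> derivable_pt_lim g x (g1 x)) ->
  (forall x, p <= x <= q -> 0 <= g1 x) -> g p <= g q.
Proof.
  intros Hpq Hd Hpos.
  destruct (Req_dec p q) as [->|Hne]; [lra|].
  destruct (MVT_cor2 g g1 p q ltac:(lra) Hd) as [c [Hc1 Hc2]].
  assert (0 <= g1 c) by (apply Hpos; lra).
  nra.
Qed.

Lemma Rmin_lip p x y : Rabs (Rmin p x - Rmin p y) <= Rabs (x - y).
Proof.
  unfold Rmin; destruct (Rle_dec p x); destruct (Rle_dec p y);
  unfold Rabs; repeat destruct Rcase_abs; lra.
Qed.

Section CL.
Variables (g g1 g2 : R -> R) (a e c eps kap : R).
Hypotheses (Hae : a <= e) (Heps : 0 < eps) (Hkap : 0 < kap)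
  (Hd1 : forall x, a <= x <= e -> derivable_pt_lim g x (g1 x))
  (Hd2 : forall x, a <= x <= e -> derivable_pt_lim g1 x (g2 x))
  (Hreg : forall x, a <= x <= e -> c < g x -> Rabs (g1 x) <= eps -> kap <= g2 x)
  (Hga : c < g a) (Hg1a : 0 <= g1 a).

Let phi x := Rmin (eps / 2) (kap * (x - a) / 2).

Lemma phi_lip x y : Rabs (phi x - phi y) <= kap / 2 * Rabs (x - y).
Proof.
  unfold phi. eapply Rle_trans; [apply Rmin_lip|].
  replace (kap * (x - a) / 2 - kap * (y - a) / 2) with (kap / 2 * (x - y)) by field.
  rewrite Rabs_mult, (Rabs_right (kap/2)); lra.
Qed.

Lemma phi_nonneg x : a <= x -> 0 <= phi x.
Proof. intros. unfold phi, Rmin; destruct Rle_dec; nra. Qed.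

Lemma phi_a : phi a = 0.
Proof. assert (H : kap * (a - a) / 2 = 0) by field. unfold phi. rewrite H.
  unfold Rmin; destruct Rle_dec; lra. Qed.

Lemma phi_le x : phi x <= eps / 2.
Proof. unfold phi; apply Rmin_l. Qed.

Lemma CL : forall x, a <= x <= e -> phi x <= g1 x.
Proof.
  apply NNPP; intro Hno.
  apply not_all_ex_not in Hno. destruct Hno as [x0 Hx0].
  apply imply_to_and in Hx0. destruct Hx0 as [Hx0 Hx0'].
  set (S y := a <= y <= e /\ forall z, a <= z <= y -> phi z <= g1 z).
  assert (HS_b : bound S) by (exists e; intros y [Hy _]; lra).
  assert (HS_ne : exists y, S y).
  { exists a. unfold S; split; [lra|]. intros z Hz. replace z with a by lra.
    rewrite phi_a; lra. }
  destruct (completeness S HS_b HS_ne) as [s [Hub Hlub]].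
  assert (Has : a <= s).
  { apply Hub. unfold S; split; [lra|]. intros z Hz.
    replace z with a by lra. rewrite phi_a; lra. }
  assert (Hse : s <= e) by (apply Hlub; intros y [Hy _]; lra).
  assert (Hi : forall z, a <= z < s -> phi z <= g1 z).
  { intros z Hz. apply NNPP; intro Hn.
    assert (Hzub : is_upper_bound S z).
    { intros y [Hy Hy']. destruct (Rle_dec y z) as [|Hyz]; [auto|].
      exfalso; apply Hn; apply Hy'; lra. }
    specialize (Hlub z Hzub); lra. }
  assert (Hii : phi s <= g1 s).
  { destruct (Req_dec s a) as [->|Hsa].
    { rewrite phi_a; lra. }
    apply Rnot_lt_le; intro Hlt.
    set (gap := phi s - g1 s).
    destruct (cont_of_deriv g1 s (g2 s) (Hd2 s ltac:(lra)) (gap/2) ltac:(unfold gap; lra)) as [d [Hd Hdd]].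
    set (d' := Rmin d (Rmin (s - a) (gap / kap))).
    assert (Hd'1 : d' <= d) by apply Rmin_l.
    assert (Hd'2 : d' <= s - a) by (eapply Rle_trans; [apply Rmin_r| apply Rmin_l]).
    assert (Hd'3 : d' <= gap / kap) by (eapply Rle_trans; [apply Rmin_r| apply Rmin_r]).
    assert (Hd'p : 0 < d').
    { apply Rmin_pos; [lra| apply Rmin_pos; [lra| apply Rdiv_lt_0_compat; unfold gap; lra]]. }
    set (z := s - d' / 2).
    assert (H1 : Rabs (g1 z - g1 s) < gap / 2).
    { apply Hdd. unfold z. replace (s - d'/2 - s) with (- (d'/2)) by ring.
      rewrite Rabs_Ropp, Rabs_right; lra. }
    assert (H2 : Rabs (phi z - phi s) <= kap / 2 * (d'/2)).
    { eapply Rle_trans; [apply phi_lip|]. unfold z.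
      replace (s - d'/2 - s) with (- (d'/2)) by ring.
      rewrite Rabs_Ropp, Rabs_right; lra. }
    assert (H3 : kap * d' <= gap).
    { apply (Rmult_le_compat_l kap) in Hd'3; [|lra].
      unfold Rdiv in Hd'3. rewrite <- Rmult_assoc, (Rmult_comm kap gap), Rmult_assoc, Rinv_r in Hd'3 by lra.
      lra. }
    assert (H4 : phi z <= g1 z) by (apply Hi; unfold z; lra).
    apply Rabs_def2 in H1. apply Rabs_le_between in H2. unfold gap in *. lra. }
  assert (HsS : forall z, a <= z <= s -> phi z <= g1 z).
  { intros z Hz. destruct (Req_dec z s) as [->|]; auto. apply Hi; lra. }
  destruct (Req_dec s e) as [Hse'|Hse'].
  { apply Hx0'. apply HsS. lra. }
  assert (Hgs : c < g s).
  { assert (g a <= g s); [|lra].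
    apply mono with g1; [lra| intros; apply Hd1; lra|].
    intros x Hx. apply Rle_trans with (phi x); [apply phi_nonneg; lra| apply HsS; lra]. }
  assert (Hext : exists d, 0 < d /\ forall z, s <= z <= s + d -> phi z <= g1 z).
  { destruct (Rle_lt_or_eq_dec _ _ Hii) as [Hlt|Heq].
    - set (gap := g1 s - phi s).
      destruct (cont_of_deriv g1 s (g2 s) (Hd2 s ltac:(lra)) (gap/2) ltac:(unfold gap; lra)) as [d [Hd Hdd]].
      set (d' := Rmin d (gap / kap)).
      assert (Hd'1 : d' <= d) by apply Rmin_l.
      assert (Hd'3 : d' <= gap / kap) by apply Rmin_r.
      assert (Hd'p : 0 < d') by (apply Rmin_pos; [lra| apply Rdiv_lt_0_compat; unfold gap; lra]).
      assert (H3 : kap * d' <= gap).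
      { apply (Rmult_le_compat_l kap) in Hd'3; [|lra].
        unfold Rdiv in Hd'3. rewrite <- Rmult_assoc, (Rmult_comm kap gap), Rmult_assoc, Rinv_r in Hd'3 by lra.
        lra. }
      exists (d'/2). split; [lra|]. intros z Hz.
      assert (H1 : Rabs (g1 z - g1 s) < gap / 2).
      { apply Hdd. rewrite Rabs_right; lra. }
      assert (H2 : Rabs (phi z - phi s) <= kap / 2 * (d'/2)).
      { eapply Rle_trans; [apply phi_lip|]. rewrite Rabs_right by lra.
        apply Rmult_le_compat_l; lra. }
      apply Rabs_def2 in H1. apply Rabs_le_between in H2. unfold gap in *. lra.
    - assert (Hg1s : Rabs (g1 s) <= eps).
      { pose proof (phi_nonneg s Has). pose proof (phi_le s).
        rewrite Rabs_right; lra. }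
      assert (Hg2 : kap <= g2 s) by (apply Hreg; auto; lra).
      destruct (Hd2 s ltac:(lra) (kap/2) ltac:(lra)) as [del Hdel].
      exists (del / 2). split; [pose proof (cond_pos del); lra|].
      intros z Hz. destruct (Req_dec z s) as [->|Hzs]; [lra|].
      set (h := z - s).
      assert (Hh : 0 < h) by (unfold h; lra).
      assert (Hh' : Rabs h < del) by (rewrite Rabs_right; unfold h; lra).
      specialize (Hdel h ltac:(lra) Hh').
      replace (s + h) with z in Hdel by (unfold h; ring).
      apply Rabs_def2 in Hdel. destruct Hdel as [_ Hdel].
      assert (Hq : kap / 2 < (g1 z - g1 s) / h) by lra.
      assert (Hq' : kap / 2 * h < g1 z - g1 s).
      { assert (E : g1 z - g1 s = (g1 z - g1 s) / h * h) by (field; lra).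
        rewrite E. apply Rmult_lt_compat_r; lra. }
      assert (H2 : Rabs (phi z - phi s) <= kap / 2 * h).
      { eapply Rle_trans; [apply phi_lip|]. rewrite Rabs_right by (unfold h in *; lra).
        unfold h; lra. }
      apply Rabs_le_between in H2. lra. }
  destruct Hext as [d [Hd Hdd]].
  set (y := s + Rmin d (e - s)).
  assert (Hm1 : Rmin d (e - s) <= d) by apply Rmin_l.
  assert (Hm2 : Rmin d (e - s) <= e - s) by apply Rmin_r.
  assert (Hm3 : 0 < Rmin d (e - s)) by (apply Rmin_pos; lra).
  assert (HyS : S y).
  { unfold S, y; split; [lra|]. intros z Hz.
    destruct (Rle_dec z s); [apply HsS; lra| apply Hdd; lra]. }
  specialize (Hub y HyS). unfold y in Hub. lra.
Qed.

Lemma growth : a + eps / kap <= e -> g a + eps / 2 * (e - a - eps / kap) <= g e.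
Proof.
  intro Hle. set (a' := a + eps / kap).
  assert (Hek : 0 < eps / kap) by (apply Rdiv_lt_0_compat; lra).
  assert (Hmono : g a <= g a').
  { apply mono with g1; [unfold a'; lra| intros; apply Hd1; unfold a' in *; lra|].
    intros x Hx. apply Rle_trans with (phi x); [apply phi_nonneg; lra| apply CL; unfold a' in *; lra]. }
  destruct (Req_dec a' e) as [Ha'|Ha'].
  { unfold a' in Ha', Hmono. rewrite Ha' in Hmono. assert (H0 : e - a - eps / kap = 0) by lra. rewrite H0, Rmult_0_r. lra. }
  destruct (MVT_cor2 g g1 a' e ltac:(unfold a' in *; lra)) as [xi [Hxi1 Hxi2]].
  { intros; apply Hd1; unfold a' in *; lra. }
  assert (Hphi : phi xi = eps / 2).
  { unfold phi, Rmin. destruct Rle_dec as [|Hn]; auto.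
    exfalso. apply Hn.
    assert (kap * (eps / kap) = eps) by (field; lra).
    unfold a' in Hxi2. nra. }
  assert (Hg1 : eps / 2 <= g1 xi) by (rewrite <- Hphi; apply CL; unfold a' in *; lra).
  unfold a' in *. nra.
Qed.
End CL.

Lemma FL (g g1 g2 : R -> R) (T c eps kap K : R) :
  0 < eps -> 0 < kap ->
  (forall x, T <= x -> derivable_pt_lim g x (g1 x)) ->
  (forall x, T <= x -> derivable_pt_lim g1 x (g2 x)) ->
  (forall x, T <= x -> c < g x -> Rabs (g1 x) <= eps -> kap <= g2 x) ->
  (forall x, T <= x -> Rabs (g x) <= K) ->
  exists S, forall s, S <= s -> g s <= c.
Proof.
  intros Heps Hkap Hd1 Hd2 Hreg HK.
  assert (HK0 : 0 <= K) by (eapply Rle_trans; [apply Rabs_pos| apply (HK T); lra]).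
  assert (Hek : 0 < eps / kap) by (apply Rdiv_lt_0_compat; lra).
  set (L := eps / kap + 4 * K / eps + 1).
  assert (HL : eps / 2 * (L - eps / kap) > 2 * K).
  { unfold L. replace (eps / kap + 4 * K / eps + 1 - eps / kap) with (4 * K / eps + 1) by ring.
    replace (eps / 2 * (4 * K / eps + 1)) with (2 * K + eps / 2) by (field; lra). lra. }
  exists (T + L). intros s Hs. apply Rnot_lt_le; intro Hgs.
  assert (H4K : 0 <= 4 * K / eps) by (apply Rmult_le_pos; [lra| left; apply Rinv_0_lt_compat; lra]).
  assert (HLp : eps / kap < L) by (unfold L; lra).
  destruct (Rle_or_lt 0 (g1 s)) as [Hpos|Hneg].
  - pose proof (growth g g1 g2 s (s + L) c eps kap ltac:(lra) Heps Hkap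
      (fun x Hx => Hd1 x ltac:(lra)) (fun x Hx => Hd2 x ltac:(lra))
      (fun x Hx => Hreg x ltac:(lra)) Hgs Hpos ltac:(lra)) as Hgr.
    replace (s + L - s) with L in Hgr by ring.
    pose proof (HK s ltac:(lra)) as H1. pose proof (HK (s + L) ltac:(lra)) as H2.
    apply Rabs_le_between in H1. apply Rabs_le_between in H2. lra.
  - set (v := fun x => g (- x)). set (v1 := fun x => - g1 (- x)). set (v2 := fun x => g2 (- x)).
    assert (Hcomp : forall f f1 x, derivable_pt_lim f (- x) (f1 (- x)) ->
              derivable_pt_lim (fun y => f (- y)) x (- f1 (- x))).
    { intros f f1 x H.
      assert (Ho : derivable_pt_lim (fun y => - y) x (-1)).
      { replace (-1) with (- (1)) by ring. apply (derivable_pt_lim_opp id x 1), derivable_pt_lim_id. }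
      pose proof (derivable_pt_lim_comp (fun y => - y) f x (-1) (f1 (- x)) Ho H) as Hc.
      unfold comp in Hc. replace (- f1 (- x)) with (f1 (- x) * -1) by ring. exact Hc. }
    assert (Hv1 : forall x, - s <= x <= - T -> derivable_pt_lim v x (v1 x)).
    { intros x Hx. apply Hcomp, Hd1; lra. }
    assert (Hv2 : forall x, - s <= x <= - T -> derivable_pt_lim v1 x (v2 x)).
    { intros x Hx. unfold v1, v2.
      pose proof (Hcomp g1 g2 x (Hd2 (- x) ltac:(lra))) as H.
      pose proof (derivable_pt_lim_opp _ _ _ H) as H'.
      replace (g2 (- x)) with (- - g2 (- x)) by ring. exact H'. }
    assert (Hvreg : forall x, - s <= x <= - T -> c < v x -> Rabs (v1 x) <= eps -> kap <= v2 x).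
    { intros x Hx H1 H2. unfold v, v1, v2 in *. rewrite Rabs_Ropp in H2. apply Hreg; auto; lra. }
    assert (Hva : c < v (- s)) by (unfold v; rewrite Ropp_involutive; auto).
    assert (Hv1a : 0 <= v1 (- s)) by (unfold v1; rewrite Ropp_involutive; lra).
    pose proof (growth v v1 v2 (- s) (- T) c eps kap ltac:(lra) Heps Hkap Hv1 Hv2 Hvreg Hva Hv1a
       ltac:(lra)) as Hgr.
    unfold v in Hgr. rewrite !Ropp_involutive in Hgr.
    assert (eps / 2 * (- T - - s - eps / kap) >= eps / 2 * (L - eps / kap)).
    { apply Rle_ge, Rmult_le_compat_l; lra. }
    pose proof (HK s ltac:(lra)) as H1. pose proof (HK T ltac:(lra)) as H2.
    apply Rabs_le_between in H1. apply Rabs_le_between in H2. lra.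
Qed.

Lemma Rabs_le_between' x y : - y <= x <= y -> Rabs x <= y.
Proof. unfold Rabs; destruct Rcase_abs; lra. Qed.

Lemma DC y0 f f' t : is_deriv_from y0 f f' -> y0 < t -> derivable_pt_lim f t (f' t).
Proof.
  intros H Ht eps Heps.
  specialize (H t (Rlt_le _ _ Ht)).
  assert (Hl : locally (f' t) (fun y => Rabs (y - f' t) < eps)).
  { exists (mkposreal eps Heps). intros y Hy. exact Hy. }
  specialize (H _ Hl). destruct H as [d Hd].
  assert (Hpos : 0 < Rmin d (t - y0)) by (apply Rmin_pos; [apply cond_pos| lra]).
  exists (mkposreal _ Hpos). intros h Hh Hhd. simpl in Hhd.
  assert (Hh1 : Rabs h < d) by (eapply Rlt_le_trans; [exact Hhd| apply Rmin_l]).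
  assert (Hh2 : Rabs h < t - y0) by (eapply Rlt_le_trans; [exact Hhd| apply Rmin_r]).
  assert (Hb : ball t d (t + h)).
  { unfold ball; simpl; unfold AbsRing_ball, abs, minus, plus, opp; simpl.
    replace (t + h + - t) with h by ring. exact Hh1. }
  specialize (Hd (t + h) Hb).
  simpl in Hd.
  replace (t + h - t) with h in Hd by ring.
  apply Hd. split; [intro; apply Hh; lra|].
  apply Rabs_def2 in Hh2. lra.
Qed.

Lemma dw (u u1 e e1 : R -> R) t : derivable_pt_lim u t (u1 t) -> derivable_pt_lim e t (e1 t) ->
  e t <> 0 -> derivable_pt_lim (fun t => u t / e t) t ((u1 t * e t - u t * e1 t) / (e t * e t)).
Proof.
  intros H1 H2 H3.
  pose proof (derivable_pt_lim_div u e t _ _ H1 H2 H3) as H.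
  replace ((u1 t * e t - u t * e1 t) / (e t * e t)) with ((u1 t * e t - e1 t * u t) / (e t)²)
    by (unfold Rsqr; field; auto).
  exact H.
Qed.

Lemma dW1 (u u1 u2 e e1 e2 : R -> R) t :
  derivable_pt_lim u t (u1 t) -> derivable_pt_lim u1 t (u2 t) ->
  derivable_pt_lim e t (e1 t) -> derivable_pt_lim e1 t (e2 t) -> e t <> 0 ->
  derivable_pt_lim (fun t => (u1 t * e t - u t * e1 t) / (e t * e t)) t
    ((u2 t * e t - u t * e2 t) / (e t * e t)
      - 2 * e1 t * (u1 t * e t - u t * e1 t) / (e t * e t * e t)).
Proof.
  intros Hu Hu1 He He1 Hne.
  pose proof (derivable_pt_lim_mult u1 e t _ _ Hu1 He) as P1.
  pose proof (derivable_pt_lim_mult u e1 t _ _ Hu He1) as P2.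
  pose proof (derivable_pt_lim_minus _ _ t _ _ P1 P2) as P3.
  pose proof (derivable_pt_lim_mult e e t _ _ He He) as P4.
  assert (Hne2 : (e * e)%F t <> 0) by (unfold mult_fct; apply Rmult_integral_contrapositive; auto).
  pose proof (derivable_pt_lim_div _ _ t _ _ P3 P4 Hne2) as P5.
  unfold mult_fct, minus_fct in P5.
  match type of P5 with derivable_pt_lim _ _ ?v =>
    replace ((u2 t * e t - u t * e2 t) / (e t * e t)
      - 2 * e1 t * (u1 t * e t - u t * e1 t) / (e t * e t * e t)) with v
    by (unfold Rsqr; field; auto) end.
  exact P5.
Qed.

Lemma ident (b2 at0 d uu u1v u2v g g1 g2 : R) : g <> 0 -> uu <> 0 ->
  0 = / 2 * b2 * u2v + at0 * u1v + g * uu - uu ^ 2 - d * u1v ^ 2 / uu ->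
  / 2 * b2 / g * ((u2v * g - uu * g2) / (g * g) - 2 * g1 * (u1v * g - uu * g1) / (g * g * g))
  = uu / g * (uu / g) - uu / g * (1 + (/ 2 * b2 * g2 + at0 * g1) / g ^ 2 - d * g1 ^ 2 / g ^ 3)
    - (b2 * g1 / (g * g) + at0 / g - 2 * d * g1 / (g * g)) * ((u1v * g - uu * g1) / (g * g))
    + d / g * (((u1v * g - uu * g1) / (g * g)) * ((u1v * g - uu * g1) / (g * g))) / (uu / g).
Proof.
  intros Hg Hu Hode.
  match goal with |- ?L = ?R =>
    assert (E : L - R = (/ 2 * b2 * u2v + at0 * u1v + g * uu - uu ^ 2 - d * u1v ^ 2 / uu) / (g * g))
    by (field; auto) end.
  rewrite <- Hode in E. unfold Rdiv in E. rewrite Rmult_0_l in E. lra.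
Qed.

Lemma high_case (A W2 w Psi B W1 D dl ep MA MB : R) :
  0 < A -> A <= MA -> Rabs B <= MB -> 0 <= D -> 0 < dl -> MB * ep <= dl / 4 ->
  A * W2 = w * w - w * Psi - B * W1 + D * (W1 * W1) / w ->
  1 + dl < w -> Psi <= 1 + dl / 2 -> Rabs W1 <= ep -> dl / (4 * MA) <= W2.
Proof.
  intros HA HMA HB HD Hdl Hep Heq Hw HPsi HW1.
  assert (H1 : 0 <= D * (W1 * W1) / w).
  { apply Rmult_le_pos; [apply Rmult_le_pos; [auto| nra]| left; apply Rinv_0_lt_compat; lra]. }
  assert (H2 : Rabs (B * W1) <= MB * ep).
  { rewrite Rabs_mult. apply Rmult_le_compat; auto; apply Rabs_pos. }
  apply Rabs_le_between in H2.
  assert (H3 : w * w - w * Psi >= dl / 2) by nra.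
  assert (H4 : dl / 4 <= A * W2) by lra.
  assert (H5 : dl / 4 / A <= W2).
  { replace W2 with (A * W2 / A) by (field; lra). unfold Rdiv. apply Rmult_le_compat_r; [left; apply Rinv_0_lt_compat|]; lra. }
  eapply Rle_trans; [|exact H5].
  replace (dl / (4 * MA)) with (dl / 4 * / MA) by (field; lra).
  unfold Rdiv. apply Rmult_le_compat_l; [lra|]. apply Rinv_le_contravar; lra.
Qed.

Lemma low_case (A W2 w Psi B W1 D dl ep MA MB MD C1 : R) :
  0 < A -> A <= MA -> Rabs B <= MB -> 0 <= D -> D <= MD -> 0 < dl -> 0 < C1 ->
  0 <= ep -> ep <= 1 -> MB * ep + MD * ep / C1 <= C1 * dl / 4 ->
  A * W2 = w * w - w * Psi - B * W1 + D * (W1 * W1) / w ->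
  C1 <= w -> w < 1 - dl -> 1 - dl / 2 <= Psi -> Rabs W1 <= ep -> C1 * dl / (4 * MA) <= - W2.
Proof.
  intros HA HMA HB HD HMD Hdl HC1 Hep0 Hep1 Hep Heq Hw1 Hw HPsi HW1.
  assert (H2 : Rabs (B * W1) <= MB * ep).
  { rewrite Rabs_mult. apply Rmult_le_compat; auto; apply Rabs_pos. }
  apply Rabs_le_between in H2.
  assert (HW1b : W1 * W1 <= ep) by (apply Rabs_le_between in HW1; nra).
  assert (H1 : D * (W1 * W1) / w <= MD * ep / C1).
  { unfold Rdiv. apply Rmult_le_compat; [nra| left; apply Rinv_0_lt_compat; lra| |].
    - apply Rmult_le_compat; nra.
    - apply Rinv_le_contravar; lra. }
  assert (H3 : w * w - w * Psi <= - (C1 * dl / 2)) by nra.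
  assert (H4 : A * (- W2) >= C1 * dl / 4) by lra.
  assert (H5 : C1 * dl / 4 / A <= - W2).
  { replace (- W2) with (A * (- W2) / A) by (field; lra). unfold Rdiv. apply Rmult_le_compat_r; [left; apply Rinv_0_lt_compat|]; lra. }
  eapply Rle_trans; [|exact H5].
  replace (C1 * dl / (4 * MA)) with (C1 * dl / 4 * / MA) by (field; lra).
  unfold Rdiv. apply Rmult_le_compat_l; [nra|]. apply Rinv_le_contravar; lra.
Qed.

Lemma B_bound X Y Z Dd Mb Me Ma MD : Rabs X <= Mb -> Rabs Y <= Me -> Rabs Z <= Ma ->
  0 <= Dd -> Dd <= MD -> Rabs (X * Y + Z - 2 * Dd * Y) <= Mb * Me + Ma + 2 * MD * Me.
Proof.
  intros HX HY HZ HD1 HD2.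
  assert (H1 : Rabs (X * Y) <= Mb * Me).
  { rewrite Rabs_mult; apply Rmult_le_compat; auto; apply Rabs_pos. }
  assert (H2 : Rabs (2 * Dd * Y) <= 2 * MD * Me).
  { rewrite Rabs_mult, Rabs_mult, (Rabs_right 2), (Rabs_right Dd) by lra.
    apply Rmult_le_compat; [nra| apply Rabs_pos| nra| auto]. }
  apply Rabs_le_between in H1. apply Rabs_le_between in H2. apply Rabs_le_between in HZ.
  apply Rabs_le_between'. lra.
Qed.

Theorem theorem4p10
  (Em : Rbar) (r lam sigma a b rho delta : R -> R) (Rr : R)
  (HEm : Em <> p_infty)
  (Hr : loc_lipschitz_on Em r) (Hlam : loc_lipschitz_on Em lam)
  (Hsigma : loc_lipschitz_on Em sigma) (Ha : loc_lipschitz_on Em a)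
  (Hb : loc_lipschitz_on Em b) (Hrho : loc_lipschitz_on Em rho)
  (Hdelta : loc_lipschitz_on Em delta)
  (Hsigpos : forall y, inE Em y -> 0 < sigma y)
  (Hbnz : forall y, inE Em y -> b y <> 0)
  (Hrhob : forall y, inE Em y -> -1 <= rho y <= 1)
  (HRr : 0 < Rr /\ Rr <> 1)
  (y0 : R) (Hy0 : inE Em y0)
  (eta1 eta2 : R -> R)
  (A1pos : forall y, y0 <= y -> 0 < eta Rr r lam delta y)
  (A1C2 : is_C2_from y0 (eta Rr r lam delta) eta1 eta2)
  (A2b : bounded_from y0 (fun y => (b y) ^ 2 / eta Rr r lam delta y))
  (A2a : bounded_from y0 (fun y => atilde Rr a rho lam b y / eta Rr r lam delta y))
  (A2e : bounded_from y0 (fun y => eta1 y / eta Rr r lam delta y))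
  (A3 : is_lim (Psi b (atilde Rr a rho lam b) (dcoef Rr b rho)
                  (eta Rr r lam delta) eta1 eta2) p_infty 1)
  (u u1 u2 : R -> R)
  (Hu : is_solution_from y0 b (atilde Rr a rho lam b) (eta Rr r lam delta)
          (dcoef Rr b rho) u u1 u2)
  (C1 C2 : R) (HC : 0 < C1 < C2)
  (Hbounds : forall y, y0 <= y ->
     C1 * eta Rr r lam delta y <= u y <= C2 * eta Rr r lam delta y) :
  is_lim (fun y => u y / eta Rr r lam delta y) p_infty 1.
Proof.
  set (et := eta Rr r lam delta) in *.
  set (at0 := atilde Rr a rho lam b) in *.
  set (dd := dcoef Rr b rho) in *.
  destruct Hu as [[Hdu [Hdu1 _]] [Hupos Hode]].
  destruct A1C2 as [Hde [Hde1 _]].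
  destruct A2b as [Mb HMb]. destruct A2a as [Ma HMa]. destruct A2e as [Me HMe].
  assert (HinE : forall y, y0 <= y -> inE Em y).
  { intros y Hy. unfold inE in *. destruct Em; simpl in *; auto; lra. }
  assert (HMb0 : 0 <= Mb) by (eapply Rle_trans; [apply Rabs_pos| apply (HMb y0); lra]).
  assert (HMe0 : 0 <= Me) by (eapply Rle_trans; [apply Rabs_pos| apply (HMe y0); lra]).
  assert (HMa0 : 0 <= Ma) by (eapply Rle_trans; [apply Rabs_pos| apply (HMa y0); lra]).
  set (MD := / 2 * Mb * (Rr + 2)).
  set (MB := Mb * Me + Ma + 2 * MD * Me).
  set (MA := / 2 * Mb + 1).
  assert (HMD0 : 0 <= MD) by (unfold MD; nra).
  assert (HMB0 : 0 <= MB) by (unfold MB; nra).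
  assert (HMA0 : 0 < MA) by (unfold MA; lra).
  set (w := fun t => u t / et t).
  set (W1 := fun t => (u1 t * et t - u t * eta1 t) / (et t * et t)).
  set (W2 := fun t => (u2 t * et t - u t * eta2 t) / (et t * et t)
      - 2 * eta1 t * (u1 t * et t - u t * eta1 t) / (et t * et t * et t)).
  set (A := fun t => / 2 * (b t) ^ 2 / et t).
  set (B := fun t => (b t) ^ 2 * eta1 t / (et t * et t) + at0 t / et t
                     - 2 * dd t * eta1 t / (et t * et t)).
  set (D := fun t => dd t / et t).
  set (Ps := Psi b at0 dd et eta1 eta2).
  assert (Hetne : forall t, y0 <= t -> et t <> 0) by (intros t Ht; specialize (A1pos t Ht); lra).
  assert (Hune : forall t, y0 <= t -> u t <> 0) by (intros t Ht; specialize (Hupos t Ht); lra).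
  assert (Hid : forall t, y0 <= t ->
    A t * W2 t = w t * w t - w t * Ps t - B t * W1 t + D t * (W1 t * W1 t) / w t).
  { intros t Ht. unfold A, W2, w, Ps, Psi, B, D, W1.
    apply ident; [apply Hetne; auto| apply Hune; auto| apply Hode; auto]. }
  assert (Hb2 : forall t, y0 <= t -> 0 < (b t) ^ 2).
  { intros t Ht. pose proof (Hbnz t (HinE t Ht)) as Hbt. simpl.
    destruct (Rlt_or_le 0 (b t)); [nra|].
    destruct (Req_dec (b t) 0); [contradiction| nra]. }
  assert (HX : forall t, y0 <= t -> 0 < (b t) ^ 2 / et t <= Mb).
  { intros t Ht. specialize (HMb t Ht). simpl in HMb. apply Rabs_le_between in HMb.
    split; [|lra]. apply Rdiv_lt_0_compat; [apply Hb2| apply A1pos]; auto. }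
  assert (HA : forall t, y0 <= t -> 0 < A t /\ A t <= MA).
  { intros t Ht. specialize (HX t Ht).
    assert (E : A t = / 2 * ((b t) ^ 2 / et t)) by (unfold A; field; apply Hetne; auto).
    rewrite E. unfold MA. lra. }
  assert (HD : forall t, y0 <= t -> 0 <= D t /\ D t <= MD).
  { intros t Ht. specialize (HX t Ht). pose proof (Hrhob t (HinE t Ht)) as Hr1.
    set (k := (1 - (rho t) ^ 2) * Rr + (rho t) ^ 2 + 1).
    destruct HRr as [HRr0 _].
    assert (Hrr : 0 <= rho t * rho t <= 1) by nra.
    assert (Hk : 1 <= k <= Rr + 2).
    { unfold k; simpl. rewrite Rmult_1_r. split; nra. }
    assert (E : D t = / 2 * ((b t) ^ 2 / et t) * k)
      by (unfold D, dd, dcoef, k; field; apply Hetne; auto).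
    rewrite E. unfold MD. split; nra. }
  assert (HB : forall t, y0 <= t -> Rabs (B t) <= MB).
  { intros t Ht.
    assert (E : B t = ((b t) ^ 2 / et t) * (eta1 t / et t) + at0 t / et t - 2 * D t * (eta1 t / et t))
      by (unfold B, D; field; apply Hetne; auto).
    rewrite E. apply B_bound; [| apply HMe; auto| apply HMa; auto| apply HD; auto| apply HD; auto].
    specialize (HX t Ht). apply Rabs_le_between'. lra. }
  assert (Hw : forall t, y0 <= t -> C1 <= w t <= C2).
  { intros t Ht. specialize (Hbounds t Ht). specialize (A1pos t Ht).
    assert (E : u t = w t * et t) by (unfold w; field; lra).
    rewrite E in Hbounds. split; nra. }
  assert (Hder1 : forall x, y0 < x -> derivable_pt_lim w x (W1 x)).
  { intros x Hx. apply dw; [apply (DC y0); auto| apply (DC y0); auto| apply Hetne; lra]. }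
  assert (Hder2 : forall x, y0 < x -> derivable_pt_lim W1 x (W2 x)).
  { intros x Hx. apply dW1; try (apply (DC y0); auto). apply Hetne; lra. }
  apply is_lim_spec in A3.
  assert (HPs : forall dl, 0 < dl -> exists M, forall x, M < x -> Rabs (Ps x - 1) < dl).
  { intros dl Hdl. exact (A3 (mkposreal dl Hdl)). }
  assert (Hclose : forall dl, 0 < dl -> exists S, forall s, S <= s -> Rabs (w s - 1) <= dl).
  { intros dl Hdl.
    destruct (HPs (dl / 2) ltac:(lra)) as [M HM].
    set (T := Rmax (M + 1) (y0 + 1)).
    assert (HT1 : M + 1 <= T) by apply Rmax_l.
    assert (HT2 : y0 + 1 <= T) by apply Rmax_r.
    set (ep := dl / (4 * (MB + 1))).
    assert (Hep : 0 < ep) by (unfold ep; apply Rdiv_lt_0_compat; lra).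
    assert (HMBep : MB * ep <= dl / 4).
    { unfold ep. replace (MB * (dl / (4 * (MB + 1)))) with (dl / 4 * (MB / (MB + 1))) by (field; lra).
      assert (MB / (MB + 1) <= 1).
      { unfold Rdiv. apply Rmult_le_reg_r with (MB + 1); [lra|].
        rewrite Rmult_assoc, Rinv_l by lra. lra. }
      nra. }
    destruct (FL w W1 W2 T (1 + dl) ep (dl / (4 * MA)) C2 Hep
      ltac:(apply Rdiv_lt_0_compat; lra)
      (fun x Hx => Hder1 x ltac:(lra)) (fun x Hx => Hder2 x ltac:(lra))) as [S1 HS1].
    { intros x Hx Hc HW1.
      destruct (HA x ltac:(lra)).
      pose proof (HM x ltac:(lra)) as HPx. apply Rabs_def2 in HPx.
      apply (high_case (A x) (W2 x) (w x) (Ps x) (B x) (W1 x) (D x) dl ep MA MB);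
        auto; try lra; try apply HB; try apply HD; try apply Hid; lra. }
    { intros x Hx. pose proof (Hw x ltac:(lra)). apply Rabs_le_between'. lra. }
    assert (HMDC : 0 <= MD / C1) by (apply Rmult_le_pos; [lra| left; apply Rinv_0_lt_compat; lra]).
    assert (HQe : forall z, MB * z + MD * z / C1 = (MB + MD / C1 + 1 - 1) * z) by (intros; field; lra).
    set (Q := MB + MD / C1 + 1) in *.
    assert (HQ : 1 <= Q) by (unfold Q; lra).
    clearbody Q.
    set (q := C1 * dl / (4 * Q)).
    assert (Hq : 0 < q) by (unfold q; apply Rdiv_lt_0_compat; nra).
    set (ep2 := Rmin 1 q).
    assert (Hep21 : ep2 <= 1) by apply Rmin_l.
    assert (Hep2q : ep2 <= q) by apply Rmin_r.
    assert (Hep2 : 0 < ep2) by (apply Rmin_pos; lra).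
    assert (Hcond : MB * ep2 + MD * ep2 / C1 <= C1 * dl / 4).
    { rewrite HQe.
      assert (E : Q * q = C1 * dl / 4) by (unfold q; field; lra).
      nra. }
    destruct (FL (fun t => - w t) (fun t => - W1 t) (fun t => - W2 t) T (- (1 - dl)) ep2
      (C1 * dl / (4 * MA)) C2 Hep2 ltac:(apply Rdiv_lt_0_compat; nra)) as [S2 HS2].
    { intros x Hx. exact (derivable_pt_lim_opp _ _ _ (Hder1 x ltac:(lra))). }
    { intros x Hx. exact (derivable_pt_lim_opp _ _ _ (Hder2 x ltac:(lra))). }
    { intros x Hx Hc HW1. rewrite Rabs_Ropp in HW1.
      destruct (HA x ltac:(lra)).
      pose proof (HM x ltac:(lra)) as HPx. apply Rabs_def2 in HPx.
      apply (low_case (A x) (W2 x) (w x) (Ps x) (B x) (W1 x) (D x) dl ep2 MA MB MD C1);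
        auto; try lra; try apply HB; try apply HD; try apply Hid; try apply Hw; lra. }
    { intros x Hx. pose proof (Hw x ltac:(lra)). apply Rabs_le_between'. lra. }
    exists (Rmax S1 S2). intros s Hs.
    pose proof (HS1 s ltac:(pose proof (Rmax_l S1 S2); lra)).
    pose proof (HS2 s ltac:(pose proof (Rmax_r S1 S2); lra)).
    apply Rabs_le_between'. simpl in *. lra. }
  apply is_lim_spec. intros eps. destruct (Hclose (eps / 2) ltac:(pose proof (cond_pos eps); lra)) as [S HS].
  exists S. intros y Hy. pose proof (HS y ltac:(lra)). pose proof (cond_pos eps).
  unfold w in *. simpl. lra.
Qed.
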